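(* Consider $\mathsf{SGDsub}$ run for $T$ steps with batch parameter $B$. Suppose $B\ge\frac{100\log(T/\delta)}{\epsilon}$, $\epsilon\le c_0$ for a suitable absolute constant $c_0>0$, and $\upsilon=0.9B+\frac{2\log(T/\delta)}{\epsilon}$. Suppose that for every point $Y\in\mathbb{R}^d$, $|\{i\in[B]:q_1(Z_{i,1})\in B_\infty(Y,1/\tau)\}|<B/3$. Then with probability at least $1-\delta/(T e^{\epsilon})$, the AboveThreshold procedure returns $a_1=\bot$.
   Context: $\mathsf{SGDsub}$: users are split into groups $\{Z_{i,t}\}_{t\in[T]}$, $i\in[B]$, each user a set of $m$ data points; with iterates $x_t$, $q_t(Z_{i,t})=\frac1m\sum_{z\in Z_{i,t}}\nabla f(x_{t-1};z)$. Concentration scores $s_t=\frac1B\sum_{i,j\in[B]}\exp(-\tau\|q_t(Z_{i,t})-q_t(Z_{j,t})\|_\infty)$. AboveThreshold with privacy $\epsilon/2$ and threshold $\upsilon$: draw $\hat\upsilon=\upsilon-\mathrm{Lap}(4/\epsilon)$; for $t=1,\dots,T$ draw $\nu_t\sim\mathrm{Lap}(8/\epsilon)$; if $s_t+\nu_t<\hat\upsilon$ output $a_t=\bot$ and halt, else output $a_t=\top$. $\mathrm{Lap}(b)$ is the Laplace distribution of scale $b$. *)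

(* Defs.v *)
From mathcomp Require Import all_boot all_order all_algebra.
From mathcomp Require Import all_classical all_reals all_analysis.
Set Implicit Arguments. Unset Strict Implicit. Unset Printing Implicit Defensive.
Import Order.TTheory GRing.Theory Num.Theory.
Local Open Scope ring_scope.

Definition linf (R : realType) (d : nat) (v : 'rV[R]_d) : R :=
  \big[Num.max/0]_(k < d) `|v ord0 k|.

Definition qavg (R : realType) (d : nat) (Z : Type) (m : nat)
  (grad : 'rV[R]_d -> Z -> 'rV[R]_d) (x : 'rV[R]_d) (Zi : m.-tuple Z) : 'rV[R]_d :=
  m%:R^-1 *: \sum_(z <- Zi) grad x z.

Definition conc_score (R : realType) (d B : nat) (q : 'I_B -> 'rV[R]_d) (tau : R) : R :=
  B%:R^-1 * \sum_(i < B) \sum_(j < B) expR (- (tau * linf (q i - q j))).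

Definition lap_pdf (R : realType) (b x : R) : R := (2 * b)^-1 * expR (- (`|x| / b)).

Inductive AT_out := Bot | Top.

(* First step of AboveThreshold: hat upsilon = ups - u (u ~ Lap(4/eps)),
   nu_1 = v (v ~ Lap(8/eps)); output bot iff s_1 + nu_1 < hat upsilon. *)
Definition AT_step1 (R : realType) (s ups u v : R) : AT_out :=
  if s + v < ups - u then Bot else Top.

Definition prob_AT1_bot (R : realType) (s ups eps : R) : \bar R :=
  (\int[@lebesgue_measure R]_u
     \int[@lebesgue_measure R]_v
        ((lap_pdf (4 / eps) u * lap_pdf (8 / eps) v *
          (if AT_step1 s ups u v is Bot then 1 else 0))%:E))%E.

(* Main.v *)
Require Import Defs.
From mathcomp Require Import all_boot all_order all_algebra.
From mathcomp Require Import all_classical all_reals all_analysis.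
From mathcomp Require Import measurable_realfun.
From mathcomp.algebra_tactics Require Import ring lra.
Import Order.TTheory GRing.Theory Num.Theory.
Local Open Scope ring_scope.
Local Open Scope classical_set_scope.

Section Aux.
Context {R : realType}.
Local Notation mu := (@lebesgue_measure R).

Lemma le_intT (f g : R -> \bar R) : (forall x, (0 <= f x)%E) ->
  (forall x, (f x <= g x)%E) -> (\int[mu]_x f x <= \int[mu]_x g x)%E.
Proof.
move=> f0 fg.
have g0 : forall x, (0 <= g x)%E by move=> x; exact: le_trans (f0 x) (fg x).
rewrite (ge0_integralTE mu f0) (ge0_integralTE mu g0) /=.
apply: ereal_sup_le => _ [h hf <-]; exists h => //= x.
exact: le_trans (hf x) (fg x).
Qed.

Lemma lap_pdf_ge0 (s x : R) : 0 < s -> 0 <= lap_pdf s x.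
Proof. by move=> s0; rewrite /lap_pdf mulr_ge0 ?expR_ge0 // invr_ge0 mulr_ge0 // ltW. Qed.

Lemma measurable_lap (s : R) : measurable_fun setT (lap_pdf s).
Proof.
apply: measurable_funM => //.
apply: measurableT_comp => //.
apply: measurable_funN; apply: measurable_funM => //; exact: measurable_normr.
Qed.

Lemma measurable_ind (b : R) : measurable_fun setT (fun v : R => if v < b then 1 else 0 : R).
Proof.
apply: measurable_fun_ifT => //.
exact: measurable_fun_ltr.
Qed.

Lemma int_exp_pos (r : R) : 0 < r ->
  (\int[mu]_(x in `[0%R, +oo[) (exponential_pdf r x)%:E = 1)%E.
Proof.
move=> r0.
have mEex : measurable_fun setT (EFin \o exponential_pdf r).
  by apply/measurable_EFinP; exact: measurable_exponential_pdf.
rewrite -(@integral_exponential_pdf R r r0).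
rewrite -(setUv `[0%R, +oo[%classic) ge0_integral_setU//=; last 4 first.
  exact: measurableC.
  by rewrite setUv.
  by move=> x _; rewrite lee_fin exponential_pdf_ge0// ltW.
  exact/disj_setPCl.
rewrite [X in (_ = _ + X)%E]integral0_eq ?adde0; last first.
  by move=> x x0; rewrite /exponential_pdf patchE ifF// memNset.
by [].
Qed.

Lemma lap_lower (s b : R) : 0 < s -> 0 < b ->
  ((1 - 2^-1 * expR (- (b / s)))%:E <=
   \int[mu]_v (lap_pdf s v * (if v < b then 1 else 0))%:E)%E.
Proof.
move=> s0 b0.
set r := s^-1.
have r0 : 0 < r by rewrite invr_gt0.
set g := fun v => lap_pdf s v * (if v < b then 1 else 0).
have mg : measurable_fun setT (EFin \o g).
  apply/measurable_EFinP; apply: measurable_funM; [exact: measurable_lap|exact: measurable_ind].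
have g0 : forall v, 0 <= g v.
  by move=> v; rewrite /g mulr_ge0 ?lap_pdf_ge0 //; case: ifP.
have mE : measurable_fun setT (fun x => (2^-1 * exponential_pdf r x)%:E).
  apply/measurable_EFinP; apply: measurable_funM => //; exact: measurable_exponential_pdf.
have E0 : forall x, (0 <= (2^-1 * exponential_pdf r x)%:E)%E.
  by move=> x; rewrite lee_fin mulr_ge0 ?exponential_pdf_ge0 // ltW.
have lapE : forall x, 0 <= x -> lap_pdf s x = 2^-1 * exponential_pdf r x.
  move=> x x0; rewrite exponential_pdfE ?(ltW r0) // /lap_pdf ger0_norm //.
  rewrite invfM -mulrA; congr (_ * (_ * expR _)). by rewrite mulNr mulrC.
have lapN : forall x, x <= 0 -> lap_pdf s x = 2^-1 * exponential_pdf r (- x).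
  move=> x x0; rewrite exponential_pdfE ?(ltW r0) ?oppr_ge0 // /lap_pdf ler0_norm //.
  rewrite invfM -mulrA; congr (_ * (_ * expR _)). by rewrite [RHS]mulNr mulrC.
have E1 : (\int[mu]_(x in `[0%R, +oo[) (2^-1 * exponential_pdf r x)%:E = (2^-1)%:E)%E.
  under eq_integral do rewrite EFinM.
  rewrite ge0_integralZl_EFin //; last 2 first.
  - by move=> x _; rewrite lee_fin exponential_pdf_ge0 // ltW.
  - by apply/measurable_EFinP; apply: measurable_funTS; exact: measurable_exponential_pdf.
  by rewrite int_exp_pos // mule1.
rewrite -(setUv `[0%R, +oo[%classic) ge0_integral_setU//=;
  [|exact: measurableC|by rewrite setUv; exact: mg|by move=> x _; rewrite lee_fin; exact: (g0 x)|exact/disj_setPCl].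
have H1 : (\int[mu]_(x in ~` `[0%R, +oo[) (g x)%:E = (2^-1)%:E)%E.
  rewrite setCitvr integral_itv_bndo_bndc; last exact: measurable_funTS.
  have -> : (\int[mu]_(x in `]-oo, 0%R]) (g x)%:E = \int[mu]_(x in `]-oo, 0%R]) (2^-1 * exponential_pdf r (- x))%:E)%E.
    apply: eq_integral => x; rewrite inE /= in_itv /= => x0.
    by rewrite /g ifT ?(le_lt_trans x0 b0) // mulr1 lapN.
  by rewrite -(ge0_integration_by_substitution0 (f := fun x : R => (2^-1 * exponential_pdf r x)%:E)).
have H2 : ((2^-1 * (1 - expR (- (b * r))))%:E <= \int[mu]_(x in `[0%R, +oo[) (g x)%:E)%E.
  apply: (@le_trans _ _ (\int[mu]_(x in `[0%R, b[) (g x)%:E)%E); last first.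
    apply: ge0_subset_integral => //.
    - exact: measurable_funTS.
    - by move=> x _; rewrite lee_fin.
    - by move=> x /=; rewrite !in_itv /= => /andP[->].
  have -> : (\int[mu]_(x in `[0%R, b[) (g x)%:E = \int[mu]_(x in `[0%R, b[) (2^-1 * exponential_pdf r x)%:E)%E.
    apply: eq_integral => x; rewrite inE /= in_itv /= => /andP[x0 xb].
    by rewrite /g ifT // mulr1 lapE.
  rewrite integral_itv_bndo_bndc; last exact: measurable_funTS.
  under eq_integral do rewrite EFinM.
  rewrite ge0_integralZl_EFin //; last 2 first.
  - by move=> x _; rewrite lee_fin exponential_pdf_ge0 // ltW.
  - by apply/measurable_EFinP; apply: measurable_funTS; exact: measurable_exponential_pdf.
  have := exponential_prob_itv0c r b0; rewrite /exponential_prob => ->.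
  by rewrite -EFinB -EFinM lee_fin mulNr (mulrC r b).
rewrite H1.
have -> : (1 - 2^-1 * expR (- (b * r)))%:E = ((2^-1 * (1 - expR (- (b * r))))%:E + (2^-1)%:E)%E.
  by rewrite -EFinD; congr (_%:E); field.
exact: leeD2r.
Qed.

Lemma Pl_ge0 (s b : R) : 0 < s -> 0 < b -> 0 <= 1 - 2^-1 * expR (- (b / s)).
Proof.
move=> s0 b0.
have : expR (- (b / s)) <= 1 by rewrite expR_le1 oppr_le0 divr_ge0 // ltW.
lra.
Qed.

Lemma prob_lower (s ups eps a b : R) : 0 < eps -> 0 < a -> 0 < b -> a + b <= ups - s ->
  (((1 - 2^-1 * expR (- (a / (4 / eps)))) * (1 - 2^-1 * expR (- (b / (8 / eps)))))%:E
    <= prob_AT1_bot s ups eps)%E.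
Proof.
move=> e0 a0 b0 abc.
have s4 : 0 < 4 / eps by rewrite divr_gt0.
have s8 : 0 < 8 / eps by rewrite divr_gt0.
set Pu := 1 - 2^-1 * expR (- (a / (4 / eps))).
set Pv := 1 - 2^-1 * expR (- (b / (8 / eps))).
have Pu0 : 0 <= Pu by exact: Pl_ge0.
have Pv0 : 0 <= Pv by exact: Pl_ge0.
set K := fun u => lap_pdf (4 / eps) u * (if u < a then 1 else 0).
have K0 : forall u, 0 <= K u by move=> u; rewrite /K mulr_ge0 ?lap_pdf_ge0 //; case: ifP.
have inner : forall u, ((Pv * K u)%:E <= \int[mu]_v
        ((lap_pdf (4 / eps) u * lap_pdf (8 / eps) v *
          (if AT_step1 s ups u v is Bot then 1 else 0))%:E))%E.
  move=> u.
  apply: (@le_trans _ _ (\int[mu]_v (K u * (lap_pdf (8 / eps) v * (if v < b then 1 else 0)))%:E)%E).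
    under eq_integral do rewrite EFinM.
    rewrite ge0_integralZl_EFin //; last 2 first.
    - by move=> v _; rewrite lee_fin mulr_ge0 ?lap_pdf_ge0 //; case: ifP.
    - apply/measurable_EFinP; apply: measurable_funM; [exact: measurable_lap|exact: measurable_ind].
    rewrite mulrC EFinM; apply: lee_wpmul2l; first by rewrite lee_fin.
    exact: lap_lower.
  apply: le_intT => v.
    by rewrite lee_fin mulr_ge0 // mulr_ge0 ?lap_pdf_ge0 //; case: ifP.
  rewrite lee_fin /K.
  have p0 := lap_pdf_ge0 _ u s4; have q0 := lap_pdf_ge0 _ v s8.
  have R0 : 0 <= lap_pdf (4 / eps) u * lap_pdf (8 / eps) v *
      (if AT_step1 s ups u v is Bot then 1 else 0 : R).
    by apply: mulr_ge0; [exact: mulr_ge0|case: (AT_step1 s ups u v)].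
  case: (ltP u a) => ua; last by rewrite mulr0 mul0r.
  case: (ltP v b) => vb; last by rewrite !mulr0.
  have h : s + v < ups - u by lra.
  by rewrite /AT_step1 h !mulr1.
rewrite /prob_AT1_bot.
apply: le_trans (le_intT _ _ _ inner); last by move=> u; rewrite lee_fin mulr_ge0.
under eq_integral do rewrite EFinM.
rewrite ge0_integralZl_EFin //; last 2 first.
- by move=> u _; rewrite lee_fin.
- apply/measurable_EFinP; apply: measurable_funM; [exact: measurable_lap|exact: measurable_ind].
rewrite mulrC EFinM; apply: lee_wpmul2l; first by rewrite lee_fin.
exact: lap_lower.
Qed.

Lemma linf_ge0 (d : nat) (v : 'rV[R]_d) : 0 <= linf v.
Proof.
rewrite /linf; apply: (big_ind (fun x => 0 <= x)) => //.
by move=> x y hx _; rewrite le_max hx.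
Qed.

Lemma expRN1_le : expR (-1 : R) <= 2^-1.
Proof.
rewrite expRN lef_pV2 ?posrE ?expR_gt0 //.
by have := expR_ge1Dx (1 : R); lra.
Qed.

Lemma score_bound (d B : nat) (q : 'I_B -> 'rV[R]_d) (tau : R) : 0 < tau ->
  (forall Y, #|[set i | linf (q i - Y) < tau^-1]%SET|%:R < B%:R / 3 :> R) ->
  conc_score q tau <= 2 / 3 * B%:R.
Proof.
move=> t0 hS.
have B0 : 0 < B%:R :> R.
  have := hS 0; have : 0 <= #|[set i | linf (q i - 0) < tau^-1]%SET|%:R :> R by [].
  lra.
have inner : forall j, \sum_(i < B) expR (- (tau * linf (q i - q j))) <= 2 / 3 * B%:R.
  move=> j.
  set S := [set i | linf (q i - q j) < tau^-1]%SET.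
  apply: (@le_trans _ _ (\sum_(i < B) (2^-1 + 2^-1 * (if i \in S then 1 else 0)))).
    apply: ler_sum => i _.
    rewrite /S inE.
    have l0 := linf_ge0 _ (q i - q j).
    case: ifP => hl.
      have : expR (- (tau * linf (q i - q j))) <= 1.
        by rewrite expR_le1 oppr_le0 mulr_ge0 // ltW.
      lra.
    apply: (@le_trans _ _ (expR (-1))); last by have := expRN1_le; lra.
    rewrite ler_expR lerN2.
    move/negbT: hl; rewrite -leNgt => hl.
    by have := ler_wpM2l (ltW t0) hl; rewrite mulfV ?gt_eqF.
  rewrite big_split /= -mulr_sumr -big_mkcond /= !sumr_const card_ord.
  have := hS (q j); rewrite -/S -mulr_natr.
  rewrite -[(2^-1 : R) *+ B]mulr_natr.
  lra.
rewrite /conc_score exchange_big /=.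
apply: (@le_trans _ _ (B%:R^-1 * \sum_(j < B) (2 / 3 * B%:R))).
  by rewrite ler_pM2l ?invr_gt0 //; apply: ler_sum => j _; exact: inner.
rewrite sumr_const card_ord -(mulr_natr (2 / 3 * B%:R) B).
have Bn0 : B%:R != 0 :> R by rewrite gt_eqF.
have -> : B%:R^-1 * (2 / 3 * B%:R * B%:R) = 2 / 3 * B%:R :> R by field.
by [].
Qed.

Lemma ratr_c0 : ratr (1/100 : rat) = (1/100 : R).
Proof. by rewrite fmorph_div rmorph1 rmorph_nat. Qed.

End Aux.

Local Close Scope classical_set_scope.

Theorem lemma3p8 :
  exists c0 : rat, 0 < c0 /\
  forall (R : realType) (d B T m : nat) (Z : Type)
    (grad : 'rV[R]_d -> Z -> 'rV[R]_d) (x0 : 'rV[R]_d)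
    (data : 'I_B -> m.-tuple Z) (tau eps delta : R),
    (0 < m)%N -> (0 < T)%N -> 0 < tau -> 0 < eps -> eps <= ratr c0 ->
    0 < delta -> delta < 1 ->
    100 * ln (T%:R / delta) / eps <= B%:R ->
    (forall Y : 'rV[R]_d,
        #|[set i : 'I_B | linf (qavg grad x0 (data i) - Y) < tau^-1]|%:R
          < B%:R / 3 :> R) ->
    let ups := 9 / 10 * B%:R + 2 * ln (T%:R / delta) / eps in
    let s1 := conc_score (fun i => qavg grad x0 (data i)) tau in
    ((1 - delta / (T%:R * expR eps))%:E <= prob_AT1_bot s1 ups eps)%E.
Proof.
exists (1/100); split; first by [].
move=> R d B T m Z grad x0 data tau eps delta.
move=> m0 T0 t0 e0 ec.
move=> d0 d1 hB hS.
cbv zeta.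
set L := ln (T%:R / delta) in hB *.
set ups := (9 / 10 * B%:R + _).
set s1 := conc_score _ _.
rewrite ratr_c0 in ec.
have T1 : 1 <= T%:R :> R by rewrite ler1n.
have L0 : 0 < L.
  rewrite /L ln_gt0 // ltr_pdivlMr // mul1r; lra.
have hs1 : s1 <= 2 / 3 * B%:R by exact: score_bound.
have hBe : 100 * L <= B%:R * eps by rewrite -ler_pdivrMr.
have B0 : 0 <= B%:R :> R by [].
set c := ups - s1.
have Le0 : 0 < L / eps by rewrite divr_gt0.
have c_lb : 7 / 30 * B%:R + 2 * (L / eps) <= c by rewrite /c /ups; lra.
have c0 : 0 < c by lra.
apply: le_trans (@prob_lower R s1 ups eps (c / 3) (2 * c / 3) e0 _ _ _); last 3 first.
- by rewrite divr_gt0.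
- by rewrite divr_gt0 ?mulr_gt0.
- by rewrite /c; lra.
rewrite lee_fin.
have en0 : eps != 0 by rewrite gt_eqF.
have -> : c / 3 / (4 / eps) = c * eps / 12 by field.
have -> : 2 * c / 3 / (8 / eps) = c * eps / 12 by field.
set x := expR (- (c * eps / 12)).
have dT : delta / (T%:R * expR eps) = expR (- (L + eps)).
  rewrite expRN expRD /L lnK; last by rewrite posrE divr_gt0 // (lt_le_trans _ T1).
  have Tn0 : T%:R != 0 :> R by rewrite gt_eqF // (lt_le_trans _ T1).
  have dn0 : delta != 0 by rewrite gt_eqF.
  have en0' : expR eps != 0 by rewrite gt_eqF ?expR_gt0.
  by field; rewrite dn0 en0' Tn0.
rewrite dT.
have xg0 : 0 < x by rewrite expR_gt0.
have x1 : x <= 1 by rewrite expR_le1 oppr_le0 divr_ge0 // mulr_ge0 // ltW.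
have ey := expR_ge1Dx (- (L + eps)).
case: (leP (L + eps) (1/4)) => hy.
  nra.
have ceps : 7 / 30 * (B%:R * eps) + 2 * L <= c * eps.
  have := ler_wpM2r (ltW e0) c_lb.
  have -> : (7 / 30 * B%:R + 2 * (L / eps)) * eps = 7 / 30 * (B%:R * eps) + 2 * L by field.
  by [].
have hx : x <= expR (- (L + eps)).
  rewrite ler_expR lerN2; lra.
nra.
Qed.
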